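(* Let $G'=(V',W',E')$ be a bipartite graph with $|V'|=|W'|=k$ and maximum matching size $\mathrm{OPT}'$, let $b\ge1$ be an integer, and let $\rho\ge1$. Form $G=(V,W,E)$ by taking $b$ copies of each vertex of $V'$, setting $W=W'$ with every good having supply $b$, and connecting every copy of $v'$ to $w'$ whenever $(v',w')\in E'$. Let $M^*$ be a many-to-one matching in $G$ (each vertex of $V$ matched to at most one good, each good matched to at most $b$ vertices) with $|M^*|\ge b\,\mathrm{OPT}'/\rho$. For each $v'\in V'$ independently, choose one of its $b$ copies uniformly at random and take that copy's edge in $M^*$ (if any), viewed as an edge of $G'$; if several chosen edges share a good, keep only one of them. Then the resulting matching of $G'$ has expected size at least $\mathrm{OPT}'/(3\rho)$. *)

(* Defs.v *)
From HB Require Import structures.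
From mathcomp Require Import all_boot all_order all_algebra.
Set Implicit Arguments. Unset Strict Implicit. Unset Printing Implicit Defensive.
Import Order.TTheory GRing.Theory Num.Theory.

(* Bipartite graph G' = (V', W', E') with V' = W' = 'I_k; E v w : edge (v,w). *)

Definition is_matching (k : nat) (E : 'I_k -> 'I_k -> bool)
    (M : {set 'I_k * 'I_k}) : bool :=
  [forall e in M, E e.1 e.2] &&
  [forall e1 in M, forall e2 in M,
     ((e1.1 == e2.1) || (e1.2 == e2.2)) ==> (e1 == e2)].

Definition OPT (k : nat) (E : 'I_k -> 'I_k -> bool) : nat :=
  \max_(M : {set 'I_k * 'I_k} | is_matching E M) #|M|.

(* The blown-up graph G: V = 'I_k * 'I_b (copy i of v'), W = 'I_k (supply b).
   A many-to-one matching is a map  M : V -> option W. *)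
Definition is_many_to_one_matching (k b : nat) (E : 'I_k -> 'I_k -> bool)
    (M : 'I_k * 'I_b -> option 'I_k) : Prop :=
  (forall (v : 'I_k) (i : 'I_b) (w : 'I_k), M (v, i) = Some w -> E v w) /\
  (forall w : 'I_k, #|[set x : 'I_k * 'I_b | M x == Some w]| <= b)%N.

Definition mm_size (k b : nat) (M : 'I_k * 'I_b -> option 'I_k) : nat :=
  #|[set x : 'I_k * 'I_b | M x != None]|.

(* Rounding with choice c (copy c v chosen for each v'): the chosen edges
   (v', w) with M (v', c v') = Some w; after keeping exactly one edge per good,
   the resulting matching of G' has one edge per good hit, so its size is
   the number of distinct goods hit. *)
Definition rounded_goods (k b : nat) (M : 'I_k * 'I_b -> option 'I_k)
    (c : {ffun 'I_k -> 'I_b}) : {set 'I_k} :=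
  [set w : 'I_k | [exists v : 'I_k, M (v, c v) == Some w]].

Definition expected_rounded_size (R : numFieldType) (k b : nat)
    (M : 'I_k * 'I_b -> option 'I_k) : R :=
  ((\sum_(c : {ffun 'I_k -> 'I_b}) (#|rounded_goods M c|)%:R)
     / (#|{ffun 'I_k -> 'I_b}|)%:R)%R.

(* Main.v *)
Require Import Defs.
From HB Require Import structures.
From mathcomp Require Import all_boot all_order all_algebra.
From mathcomp Require Import lra.
Import Order.TTheory GRing.Theory Num.Theory.
Local Open Scope ring_scope.

Lemma bonf (R : realFieldType) (I : Type) (r : seq I) (x : I -> R) :
  (forall i, 0 <= x i <= 1) ->
  (\sum_(i <- r) x i) - (\sum_(i <- r) x i) ^+ 2 / 2 <=
    1 - \prod_(i <- r) (1 - x i).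
Proof.
move=> hx.
elim: r => [|i r H]; first by rewrite !big_nil expr2 mulr0 mul0r subrr subrr.
rewrite !big_cons.
move: H; set p := \prod_(j <- r) _; set s := \sum_(j <- r) _ => H.
have /andP[h0 h1] := hx i.
have H1 : 0 <= (1 - x i) * ((1 - p) - (s - s ^+ 2 / 2)).
  apply: mulr_ge0; lra.
have H2 : 0 <= x i * s ^+ 2 by apply: mulr_ge0 => //; apply: sqr_ge0.
have H3 : 0 <= x i ^+ 2 by apply: sqr_ge0.
rewrite !expr2 in H1 H2 H3 *.
nra.
Qed.

Lemma cardR (R : pzSemiRingType) (T : finType) (A : {set T}) :
  (#|A|)%:R = \sum_w ((w \in A)%:R : R).
Proof.
rewrite -sum1_card natr_sum big_mkcond /=; apply: eq_bigr => w _.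
by case: (w \in A).
Qed.

Lemma indic (R : comPzRingType) (k b : nat) (M : 'I_k * 'I_b -> option 'I_k)
    (c : {ffun 'I_k -> 'I_b}) (w : 'I_k) :
  ((w \in rounded_goods M c)%:R : R) =
    1 - \prod_v (1 - ((M (v, c v) == Some w)%:R)).
Proof.
rewrite inE; case: existsP => [[v hv]|hn].
  by rewrite (bigD1 v) //= hv subrr mul0r subr0.
rewrite big1 ?subrr // => v _.
have -> : (M (v, c v) == Some w) = false by apply/negP => h; apply: hn; exists v.
by rewrite subr0.
Qed.

Lemma sum_some (R : pzSemiRingType) (k : nat) (o : option 'I_k) :
  \sum_w ((o == Some w)%:R : R) = (o != None)%:R.
Proof.
case: o => [w0|]; last by rewrite big1.
rewrite (bigD1 w0) //= eqxx big1 ?addr0 // => w hw.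
by rewrite (inj_eq (@Some_inj _)) eq_sym (negbTE hw).
Qed.

Theorem lemma3 (R : realFieldType) (k b : nat) (E : 'I_k -> 'I_k -> bool)
    (rho : R) (M : 'I_k * 'I_b -> option 'I_k) :
  (1 <= b)%N -> 1 <= rho ->
  is_many_to_one_matching E M ->
  (b%:R * (OPT E)%:R / rho <= (mm_size M)%:R) ->
  (OPT E)%:R / (3 * rho) <= expected_rounded_size R M.
Proof.
move=> hb hrho [_ hcap] hmm.
set e := fun v i w => ((M (v, i) == Some w)%:R : R).
have Bpos : (0 : R) < b%:R by rewrite ltr0n.
have Bn0 : (b%:R : R) != 0 by rewrite gt_eqF.
set x := fun v w => (\sum_i e v i w) / b%:R.
have eq1 : expected_rounded_size R M = \sum_w (1 - \prod_v (1 - x v w)).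
  rewrite /expected_rounded_size.
  under eq_bigr do rewrite cardR.
  rewrite exchange_big /= mulr_suml; apply: eq_bigr => w _.
  under eq_bigr do rewrite indic.
  rewrite sumrB sumr_const.
  have -> : \sum_(c : {ffun 'I_k -> 'I_b}) \prod_v (1 - (M (v, c v) == Some w)%:R)
      = (\prod_v \sum_i (1 - e v i w) : R).
    by rewrite (bigA_distr_bigA (fun v i => 1 - e v i w)).
  have hN : ((#|{ffun 'I_k -> 'I_b}|)%:R : R) = \prod_(v : 'I_k) (b%:R : R).
    by rewrite card_ffun !card_ord natrX prodr_const card_ord.
  rewrite -mulr_natl mulr1 mulrBl divff; last by rewrite hN; apply/prodf_neq0 => v _.
  congr (_ - _); rewrite hN -prodf_div; apply: eq_bigr => v _.
  rewrite /x sumrB sumr_const card_ord -mulr_natl mulr1 mulrBl divff //.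
have e01 : forall v i w, 0 <= e v i w <= 1.
  by move=> v i w; rewrite /e; case: eqP => _; rewrite ?ler01 ?lexx.
have hx : forall v w, 0 <= x v w <= 1.
  move=> v w; rewrite /x; apply/andP; split.
    by apply: divr_ge0; [apply: sumr_ge0 => i _; case/andP: (e01 v i w)|apply: ltW].
  rewrite ler_pdivrMr // mul1r.
  apply: (le_trans (y := \sum_(i : 'I_b) (1 : R))).
    by apply: ler_sum => i _; case/andP: (e01 v i w).
  by rewrite sumr_const card_ord.
have hcnt : forall w, \sum_v \sum_i e v i w = ((#|[set y | M y == Some w]|)%:R : R).
  move=> w; rewrite pair_bigA cardR /=; apply: eq_bigr => -[v i] _.
  by rewrite inE.
have hs : forall w, \sum_v x v w <= 1.
  move=> w; rewrite /x -mulr_suml hcnt ler_pdivrMr // mul1r ler_nat.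
  exact: hcap.
have hsum : \sum_w \sum_v x v w = (mm_size M)%:R / b%:R.
  rewrite /x; under eq_bigr do rewrite -mulr_suml.
  rewrite -mulr_suml; congr (_ * _).
  rewrite exchange_big /=; under eq_bigr do rewrite exchange_big /=.
  rewrite /mm_size cardR pair_bigA /=; apply: eq_bigr => -[v i] _.
  by rewrite inE /e sum_some.
have key : (mm_size M)%:R / b%:R / 2 <= expected_rounded_size R M.
  rewrite eq1 -hsum mulr_suml; apply: ler_sum => w _.
  apply: (le_trans _ (@bonf R _ (index_enum 'I_k) (fun v => x v w) (fun v => hx v w))).
  have := hs w; have : 0 <= \sum_v x v w by apply: sumr_ge0 => v _; case/andP: (hx v w).
  move: (\sum_v x v w) => s h0 h1.
  rewrite expr2; nra.
apply: le_trans key.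
have rpos : 0 < rho by apply: lt_le_trans hrho; exact: ltr01.
set O := (OPT E)%:R : R.
set m := (mm_size M)%:R : R.
have O0 : 0 <= O by rewrite /O ler0n.
have hq : O / rho <= m / b%:R.
  by rewrite ler_pdivlMr // mulrC mulrA.
have q0 : 0 <= O / rho by apply: divr_ge0 => //; apply: ltW.
rewrite invfM (mulrC 3^-1) mulrA.
move: hq q0; move: (O / rho) (m / b%:R) => q t h1 h2.
clear -h1 h2; lra.
Qed.
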